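(* For any graph $G$ with $\gamma_{t2}(G) \geq 3$, $ct_{\gamma_{t2}}(G) \leq 3$.
   Context: All graphs are finite, simple and connected. A semitotal dominating set of a graph $G$ is a set $D\subseteq V(G)$ such that every vertex of $V(G)\setminus D$ has a neighbour in $D$ and every vertex of $D$ is at distance at most two in $G$ from some other vertex of $D$; $\gamma_{t2}(G)$ denotes the minimum size of a semitotal dominating set of $G$. Contracting an edge $uv$ means deleting $u$ and $v$ and adding a new vertex adjacent to every neighbour of $u$ or $v$. $ct_{\gamma_{t2}}(G)$ is the smallest integer $k$ such that there is a set of $k$ edges of $G$ whose contraction yields a graph $G'$ with $\gamma_{t2}(G')<\gamma_{t2}(G)$. *)

(* Defs.v *)
From mathcomp Require Import all_boot.
Set Implicit Arguments. Unset Strict Implicit. Unset Printing Implicit Defensive.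

Section Graphs.
Variable V : finType.
Variable adj : rel V.

Definition simple_graph : Prop := symmetric adj /\ irreflexive adj.
Definition connected_graph : Prop := forall x y : V, connect adj x y.

Definition dist_le2 (u v : V) : bool :=
  (u != v) && (adj u v || [exists w, adj u w && adj w v]).

Definition semitotal_dom (D : {set V}) : bool :=
  [forall x, (x \notin D) ==> [exists y in D, adj x y]] &&
  [forall x in D, [exists y in D, (y != x) && dist_le2 x y]].

(* gamma_t2 : minimum size of a semitotal dominating set (the default #|V|
   is only reached when no semitotal dominating set exists) *)
Definition gamma_t2 : nat :=
  \big[minn/#|V|]_(D : {set V} | semitotal_dom D) #|D|.
End Graphs.

Section Contraction.
Variable T : finType.
Variable e : rel T.
Definition edge_set (F : {set {set T}}) : Prop :=
  forall f, f \in F -> exists u v, e u v /\ f = [set u; v].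

(* contracting the edges of F: vertices are the classes of the equivalence
   generated by F; two distinct classes are adjacent iff G has an edge
   between them *)
Definition crel (F : {set {set T}}) : rel T := fun a b => [set a; b] \in F.
Definition ccls (F : {set {set T}}) (x : T) : {set T} :=
  [set y | connect (crel F) x y].
Definition cvert (F : {set {set T}}) : {set {set T}} := [set ccls F x | x in T].
Definition contr_V (F : {set {set T}}) : finType := {A : {set T} | A \in cvert F}.
Definition contr_adj (F : {set {set T}}) : rel (contr_V F) :=
  fun A B => (val A != val B) &&
    [exists x in val A, exists y in val B, e x y].
End Contraction.
Arguments contr_adj {T} e F.
Arguments contr_V {T} F.

(* Main.v *)
Require Import Defs.
From mathcomp Require Import all_boot.
Set Implicit Arguments. Unset Strict Implicit. Unset Printing Implicit Defensive.

Lemma bmin_le (V : finType) (P : pred V) (f : V -> nat) m j :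
  P j -> \big[minn/m]_(i | P i) f i <= f j.
Proof.
move=> Pj.
have: j \in index_enum V by rewrite mem_index_enum.
elim: (index_enum V) => //= i s IH; rewrite big_cons inE => /orP [/eqP<-|js].
  by rewrite Pj geq_minl.
by case: (P i); rewrite ?geq_min IH ?orbT.
Qed.

Lemma bmin_idx (V : finType) (P : pred V) (f : V -> nat) m :
  \big[minn/m]_(i | P i) f i <= m.
Proof. by apply: (big_rec (fun x => x <= m)) => // i x _ hx; rewrite geq_min hx orbT. Qed.

Lemma bmin_ge (V : finType) (P : pred V) (f : V -> nat) m n :
  n <= m -> (forall i, P i -> n <= f i) -> n <= \big[minn/m]_(i | P i) f i.
Proof. by move=> hm hi; apply: (big_rec (fun x => n <= x)) => // i x Pi hx; rewrite leq_min hx hi. Qed.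

Lemma contr_lt (T : finType) (e : rel T) (p0 p1 p2 p3 : T) (D : {set T}) :
  semitotal_dom e D ->
  (exists d d', [/\ d \in D, d' \in D, d != d', d \in [set p0; p1; p2; p3]
                 & d' \in [set p0; p1; p2; p3]]) ->
  (exists d1 d2, [/\ d1 \in D, d2 \in D, d1 \in [set p0; p1; p2; p3],
                 d2 \notin [set p0; p1; p2; p3] & dist_le2 e d1 d2]) ->
  gamma_t2 (contr_adj e [set [set p0; p1]; [set p1; p2]; [set p2; p3]]) < #|D|.
Proof.
set C := [set p0; p1; p2; p3].
set F := [set [set p0; p1]; [set p1; p2]; [set p2; p3]].
move=> hD h3 h4.
set r := crel F.
have rsym : symmetric r by move=> a b; rewrite /r /crel setUC.
have csym : connect_sym r := sym_connect_sym rsym.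
have rC : forall a b, r a b -> a \in C /\ b \in C.
  move=> a b; rewrite /r /crel => hab.
  have ha := set21 a b; have hb := set22 a b.
  move: hab; rewrite !inE => /orP [/orP [] | ] /eqP hab; move: ha hb; rewrite hab !inE;
  by case/orP=>/eqP->; case/orP=>/eqP->; rewrite !eqxx ?orbT.
have hC1 : forall u v, connect r u v -> u = v \/ (u \in C /\ v \in C).
  move=> u v /connectP [q]; elim: q u => [|y q IH] u /=; first by move=> _ ->; left.
  case/andP => ruy pq hv; right; have [uC yC] := rC _ _ ruy; split => //.
  by case: (IH y pq hv) => [<- | [] _ ].
have r01 : r p0 p1 by rewrite /r /crel !inE eqxx.
have r12 : r p1 p2 by rewrite /r /crel !inE eqxx ?orbT.
have r23 : r p2 p3 by rewrite /r /crel !inE eqxx ?orbT.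
have c0 : forall u, u \in C -> connect r p0 u.
  move=> u; rewrite !inE => /orP [/orP [/orP [] |] |] /eqP ->.
  - exact: connect0.
  - exact: connect1.
  - exact: connect_trans (connect1 r01) (connect1 r12).
  - exact: connect_trans (connect_trans (connect1 r01) (connect1 r12)) (connect1 r23).
have hC2 : forall u v, u \in C -> v \in C -> connect r u v.
  move=> u v uC vC; apply: connect_trans (c0 v vC); rewrite csym; exact: c0.
have memc : forall x, ccls F x \in cvert F by move=> x; apply: imset_f.
pose pi x : contr_V F := exist _ (ccls F x) (memc x).
have inpi : forall x y, (y \in val (pi x)) = connect r x y by move=> x y; rewrite /= /ccls inE.
have piE : forall u v, (pi u == pi v) = connect r u v.
  move=> u v; apply/eqP/idP => [h|h].
  - have: v \in val (pi v) by rewrite inpi connect0.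
    by rewrite -h inpi.
  - apply: val_inj; rewrite /= /ccls; apply/setP => z; rewrite !inE (same_connect csym h).
    done.
have piS : forall A : contr_V F, exists x, A = pi x.
  case=> A hA; case/imsetP: (hA) => x _ eA; exists x; apply: val_inj => /=. exact eA.
have adj : forall u v u' v', connect r u u' -> connect r v v' -> pi u != pi v ->
     e u' v' -> contr_adj e F (pi u) (pi v).
  move=> u v u' v' hu hv hne he; rewrite /contr_adj (inj_eq val_inj) hne /=.
  apply/existsP; exists u'; rewrite inpi hu /=; apply/existsP; exists v'.
  by rewrite inpi hv.
have P : forall d, d \in D -> exists d1 d2, [/\ d1 \in D, d2 \in D, connect r d d1,
     ~~ connect r d1 d2 & dist_le2 e d1 d2].
  move=> d dD; case: (boolP (d \in C)) => dC.
  - case: h4 => d1 [d2 [d1D d2D d1C d2C dl]]; exists d1, d2; split => //.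
      exact: hC2.
    apply/negP => /hC1 [eq|[_ H]]; last by rewrite H in d2C.
    by rewrite -eq d1C in d2C.
  - case/andP: (hD) => _ /forallP tot.
    have := tot d; rewrite dD /= => /existsP [d2 /andP [d2D /andP [_ dl]]].
    exists d, d2; split; [done|done|exact: connect0| |done].
    apply/negP => /hC1 [eq|[dC' _]]; last by rewrite dC' in dC.
    by move: dl; rewrite /dist_le2 eq eqxx.
set D' := [set pi x | x in D].
have hD' : semitotal_dom (contr_adj e F) D'.
  apply/andP; split.
  - apply/forallP => X; apply/implyP => XnD; case: (piS X) => x eX; subst X.
    have xnD : x \notin D by apply: contra XnD => xD; apply: imset_f.
    case/andP: hD => /forallP dom _.
    have := dom x; rewrite xnD /= => /existsP [y /andP [yD exy]].
    apply/existsP; exists (pi y); rewrite imset_f //=.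
    apply: (adj x y x y (connect0 _ _) (connect0 _ _)) => //.
    apply: contra XnD => /eqP ->; exact: imset_f.
  - apply/forallP => X; apply/implyP => /imsetP [d dD ->].
    have [d1 [d2 [d1D d2D hdd1 nd12 dl]]] := P d dD.
    have e1 : pi d = pi d1 by apply/eqP; rewrite piE.
    apply/existsP; exists (pi d2); rewrite imset_f //=.
    rewrite e1; have ne : pi d2 != pi d1 by rewrite eq_sym piE.
    rewrite ne /= /dist_le2 eq_sym ne /=.
    have ne' : pi d1 != pi d2 by rewrite eq_sym.
    have c1 := connect0 r d1; have c2 := connect0 r d2.
    case/andP: dl => _ /orP [e12|/existsP [w /andP [e1w ew2]]].
      by rewrite (adj d1 d2 d1 d2 c1 c2 ne' e12).
    case: (boolP (pi w == pi d1)) => [/eqP hw1| hw1].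
      have cw : connect r d1 w by rewrite -piE hw1.
      by rewrite (adj d1 d2 w d2 cw c2 ne' ew2).
    case: (boolP (pi w == pi d2)) => [/eqP hw2| hw2].
      have cw : connect r d2 w by rewrite -piE hw2.
      by rewrite (adj d1 d2 d1 w c1 cw ne' e1w).
    apply/orP; right; apply/existsP; exists (pi w).
    have n1 : pi d1 != pi w by rewrite eq_sym.
    by rewrite (adj d1 w d1 w c1 (connect0 r w) n1 e1w) (adj w d2 w d2 (connect0 r w) c2 hw2 ew2).
have ltD' : #|D'| < #|D|.
  rewrite ltn_neqAle leq_imset_card andbT; apply/negP => /imset_injP inj.
  case: h3 => d [d' [dD d'D ne dC d'C]].
  have : pi d = pi d' by apply/eqP; rewrite piE hC2.
  by move/(inj _ _ dD d'D) => eq; rewrite eq eqxx in ne.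
apply: leq_ltn_trans ltD'; rewrite /gamma_t2.
exact: (bmin_le (P := fun X => semitotal_dom (contr_adj e F) X)).
Qed.
Lemma card3 (T : finType) (X Y Z : T) : #|[set X; Y; Z]| <= 3.
Proof.
apply: leq_trans (leq_card_setU _ _).1 _; rewrite cards1 addn1 ltnS.
by apply: leq_trans (leq_card_setU _ _).1 _; rewrite !cards1.
Qed.

Lemma dist_sym (T : finType) (e : rel T) : symmetric e ->
  forall u v, dist_le2 e u v -> dist_le2 e v u.
Proof.
move=> esym u v /andP [ne /orP [h|/existsP [w /andP [h1 h2]]]];
  rewrite /dist_le2 eq_sym ne /=; first by rewrite esym h.
by apply/orP; right; apply/existsP; exists w; rewrite (esym v w) h2 (esym w u) h1.
Qed.

Lemma comb (T : finType) (e : rel T) (D : {set T}) :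
  symmetric e -> irreflexive e -> connected_graph e ->
  semitotal_dom e D -> 3 <= #|D| ->
  exists p0 p1 p2 p3, [/\ e p0 p1, e p1 p2, e p2 p3,
  (exists d d', [/\ d \in D, d' \in D, d != d', d \in [set p0; p1; p2; p3]
                 & d' \in [set p0; p1; p2; p3]]) &
  (exists d1 d2, [/\ d1 \in D, d2 \in D, d1 \in [set p0; p1; p2; p3],
                 d2 \notin [set p0; p1; p2; p3] & dist_le2 e d1 d2])].
Proof.
move=> esym eirr conn hD D3.
case/andP: (hD) => /forallP dom /forallP tot.
have partner : forall d, d \in D -> exists2 d', d' \in D & dist_le2 e d d'.
  move=> d dD; have := tot d; rewrite dD /= => /existsP [y /andP [yD /andP [_ dl]]].
  by exists y.
have /card_gt0P [a aD] : 0 < #|D| by apply: leq_trans D3.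
have [b bD dab] := partner a aD.
have nab : a != b by case/andP: dab.
set A := [set a; b].
have AD : A \subset D by apply/subsetP => x; rewrite !inE => /orP [] /eqP ->.
case: (boolP [forall d in A, forall c in D, dist_le2 e d c ==> (c \in A)]) => iso.
- have isoP : forall d c, d \in A -> c \in D -> dist_le2 e d c -> c \in A.
    move=> d c dA cD dc; move/forall_inP: iso => /(_ d dA) /forall_inP /(_ c cD) /implyP.
    exact.
  have [c cD cA] : exists2 c, c \in D & c \notin A.
    have : ~~ (D \subset A).
      apply/negP => sub; have := subset_leq_card sub; rewrite cards2.
      by move=> h; have := leq_trans D3 h; case: (a != b).
    by case/subsetPn => x xD xA; exists x.
  pose pa v := [exists d in A, (d == v) || e v d].
  have paa : pa a by apply/existsP; exists a; rewrite !inE eqxx.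
  have npc : ~~ pa c.
    apply/negP => /existsP [d /andP [dA /orP [/eqP dc | ecd]]].
      by rewrite -dc dA in cA.
    have dnc : d != c by apply: contraNneq cA => <-.
    have := isoP d c dA cD; rewrite /dist_le2 dnc esym ecd /= => /(_ isT) cA'.
    by rewrite cA' in cA.
  have : ~~ [forall u, forall v, e u v ==> pa u ==> pa v].
    apply/negP => /forallP cl; move: npc.
    have /connectP [q pq ->] := conn a c.
    have clos : forall q x, pa x -> path e x q -> pa (last x q).
      elim => [|y q' IH] x px //=.
      case/andP => exy pq'; apply: IH pq'.
      by move/forallP: (cl x) => /(_ y); rewrite exy px.
    by rewrite (clos q a paa pq).
  case/forallPn => u /forallPn [v]; rewrite negb_imply => /andP [euv].
  rewrite negb_imply => /andP [pu npv].
  case/existsP: pu => du /andP [duA hdu].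
  have [dv dvD hv] : exists2 dv, dv \in D & (dv == v) || e v dv.
    case: (boolP (v \in D)) => vD; first by exists v; rewrite ?eqxx.
    have := dom v; rewrite vD /= => /existsP [y /andP [yD evy]].
    by exists y; rewrite ?evy ?orbT.
  have dvA : dv \notin A.
    by apply: contra npv => dvA; apply/existsP; exists dv; rewrite dvA hv.
  have duD : du \in D by apply: (subsetP AD).
  have ne : du != dv by apply: contraNneq dvA => <-.
  case/orP: hdu => [/eqP duu | eudu].
    subst u; exfalso; move/negP: dvA; apply; apply: (isoP du dv duA dvD).
    rewrite /dist_le2 ne /=.
    case/orP: hv => [/eqP dvv | evdv]; first by subst v; rewrite euv.
    by apply/orP; right; apply/existsP; exists v; rewrite euv evdv.
  case/orP: hv => [/eqP dvv | evdv].
    subst v; exfalso; move/negP: dvA; apply; apply: (isoP du dv duA dvD).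
    by rewrite /dist_le2 ne /=; apply/orP; right; apply/existsP; exists u; rewrite esym eudu euv.
  have uD : u \notin D.
    apply/negP => uD.
    have duu : du != u by apply: contraTneq eudu => ->; rewrite eirr.
    have uA : u \in A by apply: (isoP du u duA uD); rewrite /dist_le2 duu esym eudu.
    have udv : u != dv by apply: contraNneq dvA => <-.
    move/negP: dvA; apply; apply: (isoP u dv uA dvD).
    by rewrite /dist_le2 udv /=; apply/orP; right; apply/existsP; exists v; rewrite euv evdv.
  have vD : v \notin D.
    apply: contra npv => vD.
    have vA : v \in A.
      case: (boolP (du == v)) => [/eqP <- // | duv].
      apply: (isoP du v duA vD); rewrite /dist_le2 duv /=.
      by apply/orP; right; apply/existsP; exists u; rewrite esym eudu euv.
    by apply/existsP; exists v; rewrite vA eqxx.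
  have [o [oD oA odu dl]] : exists o, [/\ o \in D, o \in A, o != du & dist_le2 e du o].
    move: (duA); rewrite !inE => /orP [] /eqP ->.
      by exists b; rewrite !inE eqxx orbT eq_sym nab.
    exists a; rewrite !inE eqxx nab; split => //; exact: dist_sym.
  have ou : o != u by apply: contraNneq uD => <-.
  have ov : o != v by apply: contraNneq vD => <-.
  have odv : o != dv by apply: contraNneq dvA => <-.
  exists du, u, v, dv; split => //; first by rewrite esym.
    by exists du, dv; rewrite !inE !eqxx ?orbT.
  exists du, o; split => //; first by rewrite !inE eqxx.
  by rewrite !inE !negb_or odu ou ov odv.
- case/forall_inPn: iso => d dA /forall_inPn [c cD].
  rewrite negb_imply => /andP [dc cA].
  have dD : d \in D by apply: (subsetP AD).
  move: (cA); rewrite !inE negb_or => /andP [ca cb].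
  case/andP: (dab) => _ /orP [eab | /existsP [w /andP [eaw ewb]]].
    exists a, b, a, b; split => //; first by rewrite esym.
      by exists a, b; rewrite !inE !eqxx ?orbT.
    exists d, c; split => //; first by move: dA; rewrite !inE => /orP [] /eqP ->; rewrite !eqxx ?orbT.
    by rewrite !inE !negb_or ca cb.
  case: (boolP (w \in D)) => wD.
    have naw : a != w by apply: contraTneq eaw => ->; rewrite eirr.
    have nwb : w != b by apply: contraTneq ewb => ->; rewrite eirr.
    exists a, w, a, w; split => //; first by rewrite esym.
      by exists a, w; rewrite !inE !eqxx ?orbT.
    exists w, b; split => //; first by rewrite !inE eqxx ?orbT.
      by rewrite !inE !negb_or (eq_sym b a) nab (eq_sym b w) nwb.
    by rewrite /dist_le2 nwb ewb.
  have cw : c != w by apply: contraNneq wD => <-.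
  exists a, w, b, w; split => //; first by rewrite esym.
    by exists a, b; rewrite !inE !eqxx ?orbT.
  exists d, c; split => //; first by move: dA; rewrite !inE => /orP [] /eqP ->; rewrite !eqxx ?orbT.
  by rewrite !inE !negb_or ca cb cw.
Qed.

Theorem theorem4 (T : finType) (e : rel T) :
  simple_graph e -> connected_graph e -> 3 <= gamma_t2 e ->
  exists F : {set {set T}},
    edge_set e F /\ #|F| <= 3 /\ gamma_t2 (contr_adj e F) < gamma_t2 e.
Proof.
move=> [esym eirr] conn g3.
have gT : gamma_t2 e <= #|T| by apply: bmin_idx.
have T3 : 3 <= #|T| := leq_trans g3 gT.
have semT : semitotal_dom e [set: T].
  apply/andP; split; first by apply/forallP => x; rewrite in_setT.
  apply/forallP => x; apply/implyP => _.
  have : 0 < #|[set~ x]| by rewrite cardsC1; case: #|T| T3 => [|[|n]].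
  case/card_gt0P => z; rewrite !inE => zx.
  have /connectP [[|y q] /=] := conn x z; first by move=> _ zx'; rewrite zx' eqxx in zx.
  case/andP => exy _ _; apply/existsP; exists y; rewrite in_setT /=.
  have yx : y != x by apply: contraTneq exy => ->; rewrite eirr.
  by rewrite yx /dist_le2 eq_sym yx exy.
case: (arg_minnP (fun D : {set T} => #|D|) semT) => D0 sD0 minD0.
have gD : gamma_t2 e = #|D0|.
  apply/eqP; rewrite eqn_leq; apply/andP; split.
    exact: (bmin_le (P := fun X => semitotal_dom e X)).
  by apply: bmin_ge => //; exact: max_card.
have D3 : 3 <= #|D0| by rewrite -gD.
have [p0 [p1 [p2 [p3 [e01 e12 e23 h3 h4]]]]] := comb esym eirr conn sD0 D3.
exists [set [set p0; p1]; [set p1; p2]; [set p2; p3]]; split; last split.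
- move=> f; rewrite !inE => /orP [/orP [] |] /eqP ->;
    [exists p0, p1 | exists p1, p2 | exists p2, p3]; by split.
- exact: card3.
- by rewrite gD; apply: contr_lt.
Qed.
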